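(* The abelian Lie superalgebra $A(m\mid n)$ is capable if and only if either $m=0,n=1$ or $m+n\ge 2$.
   Context: All algebras are over a field $\mathbb{F}$ of characteristic $\neq 2,3$. $A(m\mid n)$ denotes the abelian Lie superalgebra with even part of dimension $m$ and odd part of dimension $n$. A Lie superalgebra $L$ is capable if $L\cong H/Z(H)$ for some Lie superalgebra $H$, where $Z(H)$ is the center of $H$. *)

(* Defs.v *)
From HB Require Import structures.
From mathcomp Require Import all_boot all_order all_algebra.
Set Implicit Arguments. Unset Strict Implicit. Unset Printing Implicit Defensive.
Import GRing.Theory.
Local Open Scope ring_scope.

Record superdata (F : fieldType) := SuperData {
  sd_even : lmodType F;
  sd_odd  : lmodType F;
  sd_br   : (sd_even * sd_odd)%type -> (sd_even * sd_odd)%type ->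
            (sd_even * sd_odd)%type
}.

Definition sd_car (F : fieldType) (L : superdata F) : lmodType F :=
  (sd_even L * sd_odd L)%type.

(* homogeneous of parity a (false = even, true = odd) *)
Definition homog (F : fieldType) (L : superdata F) (a : bool) (x : sd_car L) : Prop :=
  if a then x.1 = 0 else x.2 = 0.

Definition ssign (F : fieldType) (b : bool) : F := if b then -1 else 1.

Definition is_lie_super (F : fieldType) (L : superdata F) : Prop :=
  let br := @sd_br F L in
  (forall (c : F) (x y z : sd_car L), br (c *: x + y) z = c *: br x z + br y z) /\
  (forall (c : F) (x y z : sd_car L), br x (c *: y + z) = c *: br x y + br x z) /\
  (forall (a b : bool) (x y : sd_car L), homog a x -> homog b y ->
      homog (a (+) b) (br x y)) /\
  (forall (a b : bool) (x y : sd_car L), homog a x -> homog b y ->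
      br x y = - (ssign F (a && b) *: br y x)) /\
  (forall (a b c : bool) (x y z : sd_car L), homog a x -> homog b y -> homog c z ->
      ssign F (a && c) *: br x (br y z) + ssign F (b && a) *: br y (br z x)
      + ssign F (c && b) *: br z (br x y) = 0).

Definition in_center (F : fieldType) (H : superdata F) (z : sd_car H) : Prop :=
  forall y : sd_car H, sd_br z y = 0.

Definition is_super_hom (F : fieldType) (H L : superdata F)
    (f : sd_car H -> sd_car L) : Prop :=
  (forall (c : F) (x y : sd_car H), f (c *: x + y) = c *: f x + f y) /\
  (forall (a : bool) (x : sd_car H), homog a x -> homog a (f x)) /\
  (forall x y : sd_car H, f (sd_br x y) = sd_br (f x) (f y)).

(* L is capable iff L ≅ H / Z(H) for some Lie superalgebra H, i.e. there is a
   surjective homomorphism H -> L whose kernel is exactly Z(H). *)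
Definition capable (F : fieldType) (L : superdata F) : Prop :=
  exists (H : superdata F) (f : sd_car H -> sd_car L),
    is_lie_super H /\ is_super_hom f /\
    (forall y : sd_car L, exists x : sd_car H, f x = y) /\
    (forall x : sd_car H, f x = 0 <-> in_center x).

Definition abelianA (F : fieldType) (m n : nat) : superdata F :=
  @SuperData F 'rV[F]_m 'rV[F]_n (fun _ _ => 0).

(* Main.v *)
Require Import Defs.
From HB Require Import structures.
From mathcomp Require Import all_boot all_order all_algebra.
From mathcomp Require Import zify.
Set Implicit Arguments. Unset Strict Implicit. Unset Printing Implicit Defensive.
Import GRing.Theory.
Local Open Scope ring_scope.

Lemma scale_pairE (F : fieldType) (U V : lmodType F) (c : F) (a : U) (b : V) :
  c *: ((a, b) : (U * V)%type) = (c *: a, c *: b).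
Proof. by []. Qed.
Lemma add_pairE (U V : zmodType) (a a' : U) (b b' : V) :
  ((a, b) : (U * V)%type) + (a', b') = (a + a', b + b').
Proof. by []. Qed.

Section Cons.
Variables (F : fieldType) (m n : nat).
Definition EH := ('rV[F]_m * ('M[F]_m * 'M[F]_n))%type.
Definition OH := ('rV[F]_n * 'M[F]_(m,n))%type.
Definition brH (x y : (EH * OH)%type) : (EH * OH)%type :=
  ((0, (x.1.1^T *m y.1.1 - y.1.1^T *m x.1.1, x.2.1^T *m y.2.1 + y.2.1^T *m x.2.1)),
   (0, x.1.1^T *m y.2.1 - y.1.1^T *m x.2.1)).
Definition Hs := @SuperData F EH OH brH.

Lemma brH_linl c (x y z : sd_car Hs) : brH (c *: x + y) z = c *: brH x z + brH y z.
Proof.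
rewrite /brH /=.
rewrite !linearD !linearZ /= !mulmxDl -!scalemxAl.
rewrite !scale_pairE !add_pairE !scaler0 !addr0.
congr (_, (_, _), (_, _)).
all: try rewrite scalerBr; try rewrite scalerDr; try rewrite scalerN; by rewrite addrACA.
Qed.

Lemma brH_linr c (x y z : sd_car Hs) : brH x (c *: y + z) = c *: brH x y + brH x z.
Proof.
rewrite /brH /=.
rewrite !linearD !linearZ /= ?mulmxDl ?mulmxDr -?scalemxAl -?scalemxAr.
rewrite !scale_pairE !add_pairE !scaler0 !addr0.
congr (_, (_, _), (_, _)).
all: try rewrite scalerBr; try rewrite scalerDr; try rewrite scalerN; try rewrite opprD; by rewrite addrACA.
Qed.

Lemma opp_pairE (U V : zmodType) (a : U) (b : V) :
  - ((a, b) : (U * V)%type) = (- a, - b).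
Proof. by []. Qed.

Lemma brH0r (x y : sd_car Hs) : y.1.1 = 0 -> y.2.1 = 0 -> brH x y = 0.
Proof.
move=> h1 h2; rewrite /brH h1 h2 ?trmx0 ?mulmx0 ?mul0mx ?subrr ?addr0 ?sub0r ?oppr0.
by [].
Qed.

Lemma brH0l (x y : sd_car Hs) : x.1.1 = 0 -> x.2.1 = 0 -> brH x y = 0.
Proof.
move=> h1 h2; rewrite /brH h1 h2 ?trmx0 ?mulmx0 ?mul0mx ?subrr ?addr0 ?sub0r ?oppr0.
by [].
Qed.

Lemma brH_grad (a b : bool) (x y : sd_car Hs) : homog a x -> homog b y ->
      homog (a (+) b) (brH x y : sd_car Hs).
Proof.
case: a; case: b; rewrite /homog /= => hx hy; rewrite /brH hx hy /=
  ?trmx0 ?mulmx0 ?mul0mx ?subrr ?addr0 ?subr0 ?sub0r ?oppr0 //.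
Qed.

Lemma brH_skew (a b : bool) (x y : sd_car Hs) : homog a x -> homog b y ->
      brH x y = - (ssign F (a && b) *: (brH y x : sd_car Hs)).
Proof.
case: a; case: b; rewrite /homog /ssign /= => hx hy; rewrite /brH hx hy /=
  ?trmx0 ?mulmx0 ?mul0mx ?subrr ?addr0 ?add0r ?subr0 ?sub0r ?oppr0 
  ?scale_pairE ?opp_pairE ?scaler0 ?oppr0 ?scale1r ?scaleN1r ?opprK ?opprB //.
by rewrite addrC.
Qed.



Lemma brH_center (hyp : ((m == 0) && (n == 1) \/ 2 <= m + n)%N)
  (h2 : (2%:R : F) != 0) (x : sd_car Hs) :
  (forall y, brH x y = 0) -> x.1.1 = 0 /\ x.2.1 = 0.
Proof.
move=> H.
have hv : x.2.1 = 0.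
  apply/rowP => i; rewrite [RHS]mxE.
  have := f_equal (fun w : sd_car Hs => w.1.2.2 i i) (H x).
  rewrite /= !mxE !big_ord1 !mxE => /eqP.
  by rewrite -mulr2n -mulr_natr mulf_eq0 (negbTE h2) orbF mulf_eq0 orbb => /eqP.
split => //; apply/rowP => i; rewrite [RHS]mxE.
case: (posnP n) => [n0|npos].
  have m2 : (1 < m)%N.
    case: hyp => [/andP [_ /eqP n1]|hmn]; lia.
  have j0 : (0 < m)%N by lia.
  pose j : 'I_m := if (i : nat) == 0%N then Ordinal m2 else Ordinal j0.
  have hij : (j == i) = false.
    apply/negbTE; rewrite /j; case: ifP => /eqP hi; apply/eqP => e;
      move: hi; rewrite -e /=; lia.
  have := f_equal (fun w : sd_car Hs => w.1.2.1 i j)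
     (H ((delta_mx 0 j : 'rV[F]_m, 0), 0)).
  rewrite /= !mxE !big_ord1 !mxE /= eqxx eq_sym hij mulr1 mul0r subr0.
  by [].
have := f_equal (fun w : sd_car Hs => w.2.2 i (Ordinal npos))
   (H ((0, 0), (delta_mx 0 (Ordinal npos) : 'rV[F]_n, 0))).
rewrite /= !mxE !big_ord1 !mxE /= mulr1 mul0r subr0.
by [].
Qed.

End Cons.

Lemma not_capable10 (F : fieldType) (h2 : (2%:R : F) != 0) :
  ~ capable (abelianA F 1 0).
Proof.
move=> [H [f [[hL1 [hL2 [hgr [hsk hJ]]]] [[hf1 [hf2 hf3]] [hsurj hker]]]]].
pose e : sd_car (abelianA F 1 0) := (const_mx 1, 0).
have [x hx] := hsurj e.
pose x0 : sd_car H := (x.1, 0).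
pose x1 : sd_car H := (0, x.2).
have hx01 : x = 1 *: x0 + x1.
  by rewrite scale1r /x0 /x1 add_pairE addr0 add0r -surjective_pairing.
have fx0 : f x0 = e.
  have hfx1 : (f x1).1 = 0 := hf2 true x1 erefl.
  have he : f x = f x0 + f x1 by rewrite {1}hx01 hf1 scale1r.
  have := f_equal fst he; rewrite /= hfx1 addr0 hx => h.
  rewrite [f x0]surjective_pairing -h; congr pair.
  by apply/rowP => -[i hi].
have hxx : sd_br x0 x0 = 0.
  have := hsk false false x0 x0 erefl erefl; rewrite /ssign /= scale1r => h.
  have : (2%:R : F) *: sd_br x0 x0 = 0 by rewrite scaler_nat mulr2n {1}h addNr.
  by move/eqP; rewrite scaler_eq0 (negbTE h2) /= => /eqP.
have hr : forall y, sd_br y x0 = 0.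
  move=> y.
  have hz : in_center ((- (f y).1 0 0) *: x0 + y).
    apply/hker; rewrite hf1 fx0 /e scale_pairE [X in _ + X]surjective_pairing add_pairE; congr pair.
      apply/rowP => j; rewrite !mxE ?ord1 mulr1 addNr //.
    have E : forall w : 'rV[F]_0, w = 0 by move=> w; apply/rowP => -[].
    exact: E.
  by have := hz x0; rewrite hL1 hxx scaler0 add0r.
have hc : in_center x0.
  move=> y.
  have hy : y = 1 *: ((y.1, 0) : sd_car H) + (0, y.2).
    by rewrite scale1r add_pairE addr0 add0r -surjective_pairing.
  rewrite hy hL2 scale1r.
  rewrite (hsk false false x0 (y.1,0)) // (hsk false true x0 (0,y.2)) //.
  by rewrite !hr !scaler0 oppr0 addr0.
have := (hker x0).2 hc; rewrite fx0 => /(f_equal fst) /= /rowP /(_ 0).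
by rewrite !mxE => /eqP; rewrite oner_eq0.
Qed.

Unset Implicit Arguments.
Set Strict Implicit.


Theorem mainTheorem2 (F : fieldType)
  (hF2 : (2 \notin [pchar F]%R)%N) (hF3 : (3 \notin [pchar F]%R)%N)
  (m n : nat) (hmn : (0 < m + n)%N) :
  capable (abelianA F m n) <-> ((m == 0) && (n == 1) \/ 2 <= m + n)%N.
Proof.
have h2 : (2%:R : F)%R != 0%R by move: hF2; rewrite inE /=.
split.
  move=> hc; case: (boolP ((m == 0) && (n == 1))%N) => [h|h]; first by left.
  right; rewrite leqNgt; apply/negP => hlt.
  have : ((m == 1) && (n == 0))%N by move: h; lia.
  by case/andP => /eqP em /eqP en; subst; exact: (not_capable10 h2 hc).
move=> hyp.
exists (Hs F m n), (fun x => (x.1.1, x.2.1)).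
split; last split; last split.
- split; first exact: brH_linl.
  split; first exact: brH_linr.
  split; first exact: brH_grad.
  split; first exact: brH_skew.
  move=> a b c x y z _ _ _.
  have E : forall u v w : sd_car (Hs F m n), sd_br u (sd_br v w) = 0 by move=> u v w; apply: brH0r.
  by rewrite !E !scaler0 !addr0.
- split; first by [].
  split; last by [].
  by move=> [] x; rewrite /homog /= => ->.
- move=> y; exists ((y.1, 0), (y.2, 0)).
  by rewrite /= -surjective_pairing.
- move=> x; split.
    move=> h y; apply: brH0l.
      exact: (f_equal fst h).
    exact: (f_equal snd h).
  by move/(brH_center hyp h2) => [/= -> ->].
Qed.
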